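(* Consider the unknown polynomial system $\dot x=A_\star Z(x)+B_\star W(x)u$ with $x\in\mathbb{R}^n$, $u\in\mathbb{R}^m$, and data $\{\dot x^j,z^j,v^j\}_{j=0}^{T-1}$ generated by $\dot x^j=A_\star z^j+B_\star v^j+d^j$, where the unknown disturbance samples satisfy $|d^j|^2\le\omega$ for all $j=0,\dots,T-1$, for a known $\omega\ge 0$. Let $\epsilon>0$. Assume that there exist a symmetric $A_{\mathrm{i}}\in\mathbb{R}^{p\times p}$, $B_{\mathrm{i}}\in\mathbb{R}^{p\times n}$ and $\tau_0,\dots,\tau_{T-1}$ satisfying the constraints $$\begin{bmatrix}-I-\sum_{j}\tau_jc_j & B_{\mathrm{i}}^\top-\sum_{j}\tau_jb_j^\top & B_{\mathrm{i}}^\top\\ B_{\mathrm{i}}-\sum_{j}\tau_jb_j & A_{\mathrm{i}}-\sum_{j}\tau_ja_j & 0\\ B_{\mathrm{i}} & 0 & -A_{\mathrm{i}}\end{bmatrix}\preceq 0,\quad A_{\mathrm{i}}\succ 0,\quad \tau_j\ge0,$$ (sums over $j=0,\dots,T-1$), and set $\bar\zeta:=-A_{\mathrm{i}}^{-1}B_{\mathrm{i}}\in\mathbb{R}^{p\times n}$, $\bar P:=A_{\mathrm{i}}^{-1/2}$, $\bar Q:=I_n$. Assume there exist polynomials $\ell,\eta,h:\mathbb{R}^n\to\mathbb{R}$ and a polynomial $K:\mathbb{R}^n\to\mathbb{R}^m$ such that for all $x\in\mathbb{R}^n$, $\eta(x)>0$ and $H(x)\preceq0$, where $$H(x):=\begin{bmatrix}\ell(x)h(x)+\epsilon+\frac{\partial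 h}{\partial x}(x)\,\bar\zeta^\top\begin{bmatrix}Z(x)\\ W(x)K(x)\end{bmatrix} & \star & \star\\ \eta(x)\bar P\begin{bmatrix}Z(x)\\ W(x)K(x)\end{bmatrix} & -2\eta(x)I_p & \star\\ \bar Q^{1/2}\frac{\partial h}{\partial x}(x)^\top & 0 & -2\eta(x)I_n\end{bmatrix}\in\mathbb{R}^{(1+p+n)\times(1+p+n)}.$$ Then the set $\mathcal{I}:=\{x\in\mathbb{R}^n: h(x)\le0\}$ is invariant for the closed-loop system $\dot x=A_\star Z(x)+B_\star W(x)K(x)$.
   Context: $A_\star\in\mathbb{R}^{n\times N_A}$, $B_\star\in\mathbb{R}^{n\times N_B}$ are unknown constant matrices; $Z:\mathbb{R}^n\to\mathbb{R}^{N_A}$ is a known vector of monomials and $W:\mathbb{R}^n\to\mathbb{R}^{N_B\times m}$ a known matrix of monomials; $p:=N_A+N_B$. The data are $z^j=Z(x^j)$, $v^j=W(x^j)u^j$ for sampled states $x^j$ and inputs $u^j$, and $\dot x^j$ the sampled state derivative. Define $c_j:=-\omega I_n+\dot x^j(\dot x^j)^\top$, $b_j:=-\begin{bmatrix}z^j\\ v^j\end{bmatrix}(\dot x^j)^\top$, $a_j:=\begin{bmatrix}z^j\\ v^j\end{bmatrix}\begin{bmatrix}z^j\\ v^j\end{bmatrix}^\top$. $\star$ denotes blocks determined by symmetry; $M^{1/2}$ is the positive semidefinite square root; $\frac{\partial h}{\partial x}(x)$ is the gradient as a row vector. A set $\mathcal{I}$ is invariant for $\dot x=a(x)$ ($a$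 polynomial) if every maximal solution starting in $\mathcal{I}$ remains in $\mathcal{I}$ on its whole interval of existence $[0,T(x_0))$. *)

(* Defs.v *)
From HB Require Import structures.
From mathcomp Require Import all_boot all_order all_algebra.
From mathcomp Require Import all_classical all_reals all_analysis.
Set Implicit Arguments. Unset Strict Implicit. Unset Printing Implicit Defensive.
Import Order.TTheory GRing.Theory Num.Theory.
Import numFieldNormedType.Exports.
Local Open Scope classical_set_scope.
Local Open Scope ring_scope.

Inductive polyfun (R : realType) (n : nat) : ('cV[R]_n -> R) -> Prop :=
| pf_const (c : R) : polyfun (fun _ => c)
| pf_coord (i : 'I_n) : polyfun (fun x => x i 0)
| pf_add f g : polyfun f -> polyfun g -> polyfun (fun x => f x + g x)
| pf_mul f g : polyfun f -> polyfun g -> polyfun (fun x => f x * g x).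

Definition monomial (R : realType) (n : nat) (f : 'cV[R]_n -> R) : Prop :=
  exists e : 'I_n -> nat, forall x, f x = \prod_(i < n) (x i 0) ^+ e i.

Definition nsd (R : realType) (k : nat) (M : 'M[R]_k) : Prop :=
  M^T = M /\ forall v : 'cV[R]_k, (v^T *m M *m v) 0 0 <= 0.
Definition psd (R : realType) (k : nat) (M : 'M[R]_k) : Prop :=
  M^T = M /\ forall v : 'cV[R]_k, 0 <= (v^T *m M *m v) 0 0.
Definition pd (R : realType) (k : nat) (M : 'M[R]_k) : Prop :=
  M^T = M /\ forall v : 'cV[R]_k, v != 0 -> 0 < (v^T *m M *m v) 0 0.

Definition grad (R : realType) (n : nat) (h : 'cV[R]_n -> R) (x : 'cV[R]_n)
  : 'rV[R]_n := \row_(i < n) derive h x (delta_mx i 0).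

Definition ode_solution (R : realType) (n : nat) (a : 'cV[R]_n -> 'cV[R]_n)
  (x0 : 'cV[R]_n) (T : \bar R) (phi : R -> 'cV[R]_n) : Prop :=
  (0%:E < T)%E /\ phi 0 = x0 /\
  {within [set t : R | 0 <= t /\ (t%:E < T)%E], continuous phi} /\
  (forall t : R, 0 < t -> (t%:E < T)%E ->
     derivable phi t 1 /\ derive1 phi t = a (phi t)).

Definition maximal_solution (R : realType) (n : nat) (a : 'cV[R]_n -> 'cV[R]_n)
  (x0 : 'cV[R]_n) (T : \bar R) (phi : R -> 'cV[R]_n) : Prop :=
  ode_solution a x0 T phi /\
  ~ (exists (T' : \bar R) (psi : R -> 'cV[R]_n),
        (T < T')%E /\ ode_solution a x0 T' psi /\
        (forall t : R, 0 <= t -> (t%:E < T)%E -> psi t = phi t)).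

Definition invariant_set (R : realType) (n : nat) (a : 'cV[R]_n -> 'cV[R]_n)
  (I : set 'cV[R]_n) : Prop :=
  forall (x0 : 'cV[R]_n) (T : \bar R) (phi : R -> 'cV[R]_n),
    I x0 -> maximal_solution a x0 T phi ->
    forall t : R, 0 <= t -> (t%:E < T)%E -> I (phi t).

(* Main.v *)
Require Import Defs.
From HB Require Import structures.
From mathcomp Require Import all_boot all_order all_algebra.
From mathcomp Require Import all_classical all_reals all_analysis.
From mathcomp Require Import ring lra.
Import Order.TTheory GRing.Theory Num.Theory.
Import numFieldNormedType.Exports.
Local Open Scope classical_set_scope.
Local Open Scope ring_scope.

Set Implicit Arguments. Unset Strict Implicit.
Section Aux.
Variable R : realType.


Lemma qf_block m1 m2 (A : 'M[R]_m1) (B : 'M[R]_(m1,m2)) C (D : 'M[R]_m2) k (a : 'M[R]_(m1,k)) (b : 'M[R]_(m2,k)) :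
  (col_mx a b)^T *m block_mx A B C D *m col_mx a b =
  a^T *m A *m a + a^T *m B *m b + (b^T *m C *m a + b^T *m D *m b).
Proof. by rewrite tr_col_mx mul_row_block mul_row_col !mulmxDl addrACA. Qed.

Lemma eD m n (A B : 'M[R]_(m,n)) i j : (A + B) i j = A i j + B i j.
Proof. by rewrite mxE. Qed.
Lemma eN m n (A : 'M[R]_(m,n)) i j : (- A) i j = - A i j.
Proof. by rewrite mxE. Qed.
Lemma eZ m n a (A : 'M[R]_(m,n)) i j : (a *: A) i j = a * A i j.
Proof. by rewrite mxE. Qed.

Lemma per_j n p (E : 'M[R]_(n,p)) zv (xd d w : 'cV[R]_n) (omega : R) :
  xd = E *m zv + d ->
  let y := E^T *m w in
  (w^T *m (- (omega *: 1%:M) + xd *m xd^T) *m w + w^T *m (- (zv *m xd^T))^T *m y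
  + (y^T *m (- (zv *m xd^T)) *m w + y^T *m (zv *m zv^T) *m y)) 0 0
  = - (omega * (w^T *m w) 0 0) + ((d^T *m w)^T *m (d^T *m w)) 0 0.
Proof.
move=> Hx y.
have -> : d = xd - E *m zv by rewrite Hx addrC addKr.
rewrite /y !trmx_mul !trmxK !raddfB !raddfN /= !trmx_mul ?trmxK .
rewrite !(mulmxDl, mulmxDr, mulmxBl, mulmxBr, mulNmx, mulmxN, mul_scalar_mx, scalemxAl, scalemxAr, mulmx1, mul1mx) /=.
rewrite !mulmxA -?scalemxAr ?mulmx1 -?scalemxAl !(eD, eN, eZ).
lra.
Qed.

Lemma dotE n (u v : 'cV[R]_n) : (u^T *m v) 0 0 = \sum_i u i 0 * v i 0.
Proof. rewrite !mxE; apply: eq_bigr => i _; by rewrite mxE. Qed.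

Lemma CS n (d w : 'cV[R]_n) :
  (\sum_i d i 0 * w i 0) ^+ 2 <= (\sum_i d i 0 ^+ 2) * (\sum_i w i 0 ^+ 2).
Proof.
set D := \sum_i d i 0 ^+ 2; set S := \sum_i d i 0 * w i 0; set W := \sum_i w i 0 ^+ 2.
have H0 : 0 <= \sum_i (D * w i 0 - S * d i 0) ^+ 2 by apply: sumr_ge0 => i _; exact: sqr_ge0.
have E : \sum_i (D * w i 0 - S * d i 0) ^+ 2 = D * (D * W - S ^+ 2).
  rewrite (eq_bigr (fun i => D^+2 * w i 0 ^+2 - (2 * D * S) * (d i 0 * w i 0) + S^+2 * d i 0 ^+ 2)); last first.
    by move=> i _; ring.
  rewrite big_split /= big_split /= sumrN -!mulr_sumr -/D -/S -/W; ring.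
have D0 : 0 <= D by apply: sumr_ge0 => i _; exact: sqr_ge0.
case: (ltrgt0P D) => [Dp|Dn|Dz].
- have : 0 <= D * (D * W - S ^+ 2) by rewrite -E.
  rewrite pmulr_rge0 // subr_ge0 => ->. done.
- by move: D0; rewrite leNgt Dn.
- have dz : forall i, d i 0 = 0.
    move=> i; apply/eqP; rewrite -sqrf_eq0 eq_le sqr_ge0 andbT -Dz /D.
    rewrite (bigD1 i) //= lerDl; apply: sumr_ge0 => k _; exact: sqr_ge0.
  have -> : S = 0 by rewrite /S big1 // => i _; rewrite dz mul0r.
  by rewrite Dz expr0n /= mul0r.
Qed.
Lemma formT k1 k2 (M : 'M[R]_(k1,k2)) (u : 'cV[R]_k1) (v : 'cV[R]_k2) :
  (u^T *m M *m v) 0 0 = (v^T *m M^T *m u) 0 0.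
Proof.
have -> : (u^T *m M *m v) 0 0 = (u^T *m M *m v)^T 0 0 by rewrite [RHS]mxE.
by rewrite !trmx_mul trmxK mulmxA.
Qed.

Lemma dsq n (d w : 'cV[R]_n) (omega : R) : \sum_i (d i 0)^+2 <= omega ->
  ((d^T *m w)^T *m (d^T *m w)) 0 0 <= omega * (w^T *m w) 0 0.
Proof.
move=> Hd.
have -> : ((d^T *m w)^T *m (d^T *m w)) 0 0 = (\sum_i d i 0 * w i 0) ^+ 2.
  rewrite !mxE big_ord1 !mxE expr2; congr (_ * _); apply: eq_bigr => i _; by rewrite mxE.
rewrite dotE.
have Hc := CS d w.
have -> : \sum_i w i 0 * w i 0 = \sum_i w i 0 ^+ 2 by apply: eq_bigr => i _; rewrite expr2.
have Hw : 0 <= \sum_i w i 0 ^+ 2 by apply: sumr_ge0 => i _; exact: sqr_ge0.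
move: Hc Hw Hd; set A := (\sum_i _ * _) ^+ 2; set B := \sum_i _ ^+ 2; set C := \sum_i w i 0 ^+ 2.
nra.
Qed.

Lemma formS k1 k2 T (tau : 'I_T -> R) (F : 'I_T -> 'M[R]_(k1,k2)) (u : 'cV[R]_k1) (v : 'cV[R]_k2) :
  (u^T *m (\sum_j tau j *: F j) *m v) 0 0 = \sum_j tau j * (u^T *m F j *m v) 0 0.
Proof.
rewrite mulmx_sumr mulmx_suml summxE; apply: eq_bigr => j _.
by rewrite -scalemxAr -scalemxAl eZ.
Qed.

Lemma ellipsoid n p T (E : 'M[R]_(n,p)) (zv : 'I_T -> 'cV[R]_p) (xdot d : 'I_T -> 'cV[R]_n)
  (omega : R) (tau : 'I_T -> R) (Ai : 'M[R]_p) (Bi : 'M[R]_(p,n)) :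
  (forall j, xdot j = E *m zv j + d j) -> (forall j, \sum_i (d j i 0)^+2 <= omega) ->
  (forall j, 0 <= tau j) -> Ai \in unitmx -> Ai^T = Ai ->
  nsd (block_mx (- 1%:M - \sum_(j < T) tau j *: (- (omega *: 1%:M) + xdot j *m (xdot j)^T))
         (row_mx (Bi^T - \sum_(j<T) tau j *: (- (zv j *m (xdot j)^T))^T) Bi^T)
         (col_mx (Bi - \sum_(j<T) tau j *: (- (zv j *m (xdot j)^T))) Bi)
         (block_mx (Ai - \sum_(j<T) tau j *: (zv j *m (zv j)^T)) 0 0 (- Ai))) ->
  forall w : 'cV[R]_n, let e := E^T + invmx Ai *m Bi in
  ((e *m w)^T *m Ai *m (e *m w)) 0 0 <= (w^T *m w) 0 0.
Proof.
move=> Hx Hd Ht UA SA [_ H] w /=; set e := E^T + invmx Ai *m Bi.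
set y := E^T *m w; set s := invmx Ai *m Bi *m w.
have := H (col_mx w (col_mx y s)).
rewrite !qf_block tr_col_mx mul_mx_row !mul_row_col.
rewrite !(mulmxDl, mulmxDr, mulmxBl, mulmxBr, mulNmx, mulmxN, mulmx0, mul0mx, mulmx1, addr0, add0r).
rewrite !(eD, eN) !formS.

have e1 : Ai *m s = Bi *m w by rewrite /s !mulmxA mulmxV // mul1mx.
have Ta3: (w^T *m Bi^T *m y) 0 0 = (y^T *m Bi *m w) 0 0 by rewrite formT trmxK.
have Ta2: (w^T *m Bi^T *m s) 0 0 = (s^T *m Bi *m w) 0 0 by rewrite formT trmxK.
have Ta6: (s^T *m Ai *m s) 0 0 = (s^T *m Bi *m w) 0 0 by rewrite -mulmxA e1 mulmxA.
have Tys: (y^T *m Ai *m s) 0 0 = (y^T *m Bi *m w) 0 0 by rewrite -mulmxA e1 mulmxA.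
have Tsy: (s^T *m Ai *m y) 0 0 = (y^T *m Ai *m s) 0 0 by rewrite formT SA.
have HS : forall j, tau j * (- (omega * (w^T *m w) 0 0) + (((d j)^T *m w)^T *m ((d j)^T *m w)) 0 0) <= 0.
  move=> j; apply: mulr_ge0_le0 => //; have := dsq w (Hd j); lra.
have HS2 : \sum_(j < T) tau j * (- (omega * (w^T *m w) 0 0) + (((d j)^T *m w)^T *m ((d j)^T *m w)) 0 0) <= 0 by apply: sumr_le0 => j _; exact: HS.
move=> HQ.
have Hsum : \sum_j tau j * (w^T *m (- (omega *: 1%:M) + xdot j *m (xdot j)^T) *m w) 0 0
  + \sum_j tau j * (w^T *m (- (zv j *m (xdot j)^T))^T *m y) 0 0
  + (\sum_j tau j * (y^T *m - (zv j *m (xdot j)^T) *m w) 0 0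
  + \sum_j tau j * (y^T *m (zv j *m (zv j)^T) *m y) 0 0)
  = \sum_(j < T) tau j * (- (omega * (w^T *m w) 0 0) + (((d j)^T *m w)^T *m ((d j)^T *m w)) 0 0).
  rewrite -!big_split; apply: eq_bigr => j _ /=.
  rewrite -(per_j w omega (Hx j)) !eD -/y; ring.
rewrite -/y -/s !raddfD /= !mulmxDl !eD Tsy Tys Ta6.
move: HQ; rewrite Ta3 Ta2 Ta6.
lra.
Qed.

Lemma vecT k (a b : 'cV[R]_k) : (b^T *m a) 0 0 = (a^T *m b) 0 0.
Proof. by rewrite !dotE; apply: eq_bigr => i _; rewrite mulrC. Qed.

Lemma sq_ge0 k (a : 'cV[R]_k) : 0 <= (a^T *m a) 0 0.
Proof. by rewrite dotE; apply: sumr_ge0 => i _; rewrite -expr2 sqr_ge0. Qed.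

Lemma hbound p n (Ai P : 'M[R]_p) (e zetab : 'M[R]_(p,n)) (g : 'rV[R]_n)
  (zk : 'cV[R]_p) (eta c : R) :
  0 < eta -> Ai \in unitmx -> Ai^T = Ai -> P^T = P -> P *m P = invmx Ai ->
  (forall w : 'cV[R]_n, ((e *m w)^T *m Ai *m (e *m w)) 0 0 <= (w^T *m w) 0 0) ->
  nsd (block_mx (c%:M + g *m zetab^T *m zk)
          (row_mx (eta *: (P *m zk))^T ((1%:M : 'M[R]_n) *m g^T)^T)
          (col_mx (eta *: (P *m zk)) ((1%:M : 'M[R]_n) *m g^T))
          (block_mx (- (2 * eta) *: (1%:M : 'M[R]_p)) 0 0 (- (2 * eta) *: (1%:M : 'M[R]_n)))) ->
  (g *m (zetab + e)^T *m zk) 0 0 <= - c.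
Proof.
move=> etap UA SA SP PP Hell [_ H].
set b := P *m zk; set a := P *m (Ai *m (e *m g^T)).
set k := (2 * eta)^-1.
have F1 : (a^T *m b) 0 0 = (g *m e^T *m zk) 0 0.
  rewrite /a /b !trmx_mul trmxK SA SP !mulmxA -(mulmxA _ P P) PP.
  by rewrite -(mulmxA _ Ai (invmx Ai)) mulmxV // mulmx1.
have F2 : (a^T *m a) 0 0 <= (g *m g^T) 0 0.
  have := Hell g^T; rewrite trmxK.
  rewrite /a !trmx_mul SA SP !mulmxA -(mulmxA _ P P) PP.
  move=> H1; rewrite -(mulmxA _ Ai (invmx Ai)) mulmxV // mulmx1; exact: H1.
have F3 : 0 <= eta ^+ 2 * (b^T *m b) 0 0 - 2 * eta * (g *m e^T *m zk) 0 0 + (a^T *m a) 0 0.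
  have := sq_ge0 (eta *: b - a).
  rewrite mulmxBr ![(_ - _)^T]linearB /= ![(_ *: _)^T]linearZ /= !mulmxBl -!scalemxAl -!scalemxAr !(eD, eN, eZ).
  rewrite (vecT a b) F1 expr2; nra.
have h1 : 2 * eta * (g *m e^T *m zk) 0 0 <= eta ^+ 2 * (b^T *m b) 0 0 + (g *m g^T) 0 0 by lra.
have := H (col_mx 1%:M (col_mx ((2^-1) *: b) (k *: g^T))).
rewrite !qf_block tr_col_mx mul_mx_row !mul_row_col.
rewrite -/b trmx1 !(mul1mx, mulmx1, mulmx0, mul0mx, addr0, add0r).
rewrite ![(_ *: _)^T]linearZ /= trmxK.
rewrite -!scalemxAl -!scalemxAr !mulmx1 -!scalemxAl !(eD, eZ).
have -> : (c%:M : 'M[R]_1) 0 0 = c by rewrite mxE eqxx mulr1n.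
rewrite raddfD /= mulmxDr mulmxDl eD.
have hk : 2 * eta * k = 1 by rewrite /k mulfV // mulf_neq0 // gt_eqF.
have kp : 0 < k by rewrite /k invr_gt0 mulr_gt0.
set t := (g *m e^T *m zk) 0 0; set B := (b^T *m b) 0 0; set G := (g *m g^T) 0 0.
have h2 : k * (2 * eta * t) <= k * (eta ^+ 2 * B + G) by rewrite ler_wpM2l // ltW.
have h3 : k * (2 * eta * t) = t by rewrite mulrA (mulrC k) hk mul1r.
have en : eta != 0 by rewrite gt_eqF.
have h4 : k * (eta ^+ 2 * B + G) = eta * B / 2 + k * G.
  rewrite /k; field; rewrite ?en //.
have h5 : k * (k * (- (2 * eta) * G)) = - (k * G).
  rewrite /k; field; rewrite ?en //.
rewrite h5; move: h2; rewrite h3 h4 => h2.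
have h6 : 2^-1 * (2^-1 * (- (2 * eta) * B)) = - (eta * B / 2).
  field; rewrite ?en //.
rewrite h6; lra.
Qed.


Lemma within_ed (A : set R) (f : R -> R) x : {within A, continuous f} -> A x ->
  forall e, 0 < e -> exists2 del, 0 < del & forall y, A y -> `|x - y| < del -> `|f x - f y| < e.
Proof.
move=> /subspace_continuousP /[apply] /cvgrPdist_lt H e e0.
have := H e e0; rewrite near_withinE => /nbhs_ballP [del del0 Hd].
exists del => // y Ay xy; apply: Hd => //.
Qed.

Lemma barrier (f p : R -> R) (Tb eps : R) : 0 < Tb -> 0 < eps ->
  {within `[0, Tb], continuous f} ->
  {within `[0, Tb], continuous (fun s => p s * f s)} ->
  (forall c, 0 < c -> c < Tb -> derivable f c 1 /\ derive1 f c <= - (p c * f c) - eps) ->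
  f 0 <= 0 -> f Tb <= 0.
Proof.
move=> Tb0 eps0 Hf Hq Hd f0.
rewrite leNgt; apply/negP => fTb.
set S := [set t | (0 <= t <= Tb) /\ f t <= 0].
have S0 : S 0 by split => //; rewrite lexx ltW.
have hS : has_sup S.
  split; first by exists 0.
  by exists Tb => t [/andP[_ ->]].
set t0 := sup S.
have t0ge : 0 <= t0 by exact: sup_upper_bound hS _ S0.
have t0le : t0 <= Tb by apply: ge_sup; [exists 0 | move=> t [/andP[_ ->]]].
have inA : forall s, 0 <= s <= Tb -> [set` `[0, Tb]] s.
  by move=> s hs; rewrite /= in_itv /=.
have ft0 : f t0 <= 0.
  rewrite leNgt; apply/negP => pos.
  have [del del0 Hdel] := within_ed Hf (inA t0 (ltac:(by rewrite t0ge t0le))) pos.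
  have [e Se He] := sup_adherent del0 hS.
  have ele : e <= t0 by exact: sup_upper_bound hS _ Se.
  case: Se => [/andP[e0 eT] fe].
  have := Hdel e (inA e (ltac:(by rewrite e0 eT))).
  have -> : `|t0 - e| = t0 - e by rewrite ger0_norm // subr_ge0.
  move=> /(_ ltac:(rewrite -/t0 in He; lra)).
  rewrite ltr_norml; lra.
have t0lt : t0 < Tb.
  rewrite lt_neqAle t0le andbT; apply/eqP => E; move: ft0; rewrite E; lra.
have fpos : forall s, t0 < s -> s <= Tb -> 0 < f s.
  move=> s ts sT; rewrite ltNge; apply/negP => fs.
  have : s <= t0.
    apply: sup_upper_bound hS _ _; split => //.
    by rewrite sT andbT; apply: le_trans t0ge (ltW ts).
  lra.
have ft0e : f t0 = 0.
  apply/eqP; rewrite eq_le ft0 /= leNgt; apply/negP => neg.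
  have [del del0 Hdel] := within_ed Hf (inA t0 (ltac:(by rewrite t0ge t0le))) (ltac:(by rewrite oppr_gt0) : 0 < - f t0).
  set s := Order.min (t0 + del / 2) Tb.
  have ss1 : t0 < s by rewrite lt_min t0lt andbT; lra.
  have ss2 : s <= Tb by rewrite ge_min lexx orbT.
  have ss3 : s <= t0 + del / 2 by rewrite ge_min lexx.
  have := Hdel s (inA s ltac:(rewrite ss2 andbT; lra)).
  have -> : `|t0 - s| = s - t0 by rewrite distrC ger0_norm // subr_ge0 ltW.
  move=> /(_ ltac:(lra)); rewrite ltr_norml.
  have := fpos s ss1 ss2; lra.
have [del del0 Hdel] := within_ed Hq (inA t0 (ltac:(by rewrite t0ge t0le))) eps0.
set s := Order.min (t0 + del / 2) Tb.
have ss1 : t0 < s by rewrite lt_min t0lt andbT; lra.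
have ss2 : s <= Tb by rewrite ge_min lexx orbT.
have ss3 : s <= t0 + del / 2 by rewrite ge_min lexx.
have key := @ler0_derive1_nincr R f t0 s.
have : f s <= f t0.
  apply: key => //.
  - move=> c; rewrite in_itv /= => /andP[c1 c2]; apply: (Hd c _ _).1; lra.
  - move=> c; rewrite in_itv /= => /andP[c1 c2].
    have [_ hc] := Hd c ltac:(lra) ltac:(lra).
    have := Hdel c (inA c ltac:(apply/andP; split; lra)).
    have -> : `|t0 - c| = c - t0 by rewrite distrC ger0_norm // subr_ge0 ltW.
    move=> /(_ ltac:(lra)); rewrite ft0e mulr0 sub0r normrN => hh.
    move: hh; rewrite ltr_norml => /andP[h1 h2]; lra.
  - apply: continuous_subspaceW Hf => y /=; rewrite !in_itv /= => /andP[y1 y2].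
    apply/andP; split; lra.
  - exact: ltW.
have := fpos s ss1 ss2; lra.
Qed.

Lemma polyfun_diff n (f : 'cV[R]_n -> R) : polyfun f -> forall x, differentiable f x.
Proof.
elim => [c|i|g k _ Hg _ Hk|g k _ Hg _ Hk] x.
- exact: differentiable_cst.
- exact: differentiable_coord.
- exact: differentiableD.
- exact: differentiableM.
Qed.

Lemma chain n (h : 'cV[R]_n -> R) (phi : R -> 'cV[R]_n) c :
  (forall x, differentiable h x) -> derivable phi c 1 ->
  derivable (h \o phi) c 1 /\
  derive1 (h \o phi) c = (grad h (phi c) *m derive1 phi c) 0 0.
Proof.
move=> dh /derivable1_diffP dphi.
have dc : differentiable (h \o phi) c by apply: differentiable_comp.
split; first exact/derivable1_diffP.
rewrite derive1E' // diff_comp // /= -derive1E' //.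
set v := derive1 phi c.
rewrite {1}(matrix_sum_delta v).
under eq_bigr => i _ do rewrite big_ord1.
rewrite linear_sum /= mxE; apply: eq_bigr => i _.
rewrite linearZ /= mxE deriveE // mulrC.
by [].
Qed.

Lemma pd_unit k (A : 'M[R]_k) : pd A -> A \in unitmx.
Proof.
move=> [_ HA]; rewrite -row_free_unit -kermx_eq0.
case: (pselect (exists i, row i (kermx A) != 0)) => [[i Hi]|Hn]; last first.
  apply/eqP/row_matrixP => i; rewrite row0; case: (boolP (row i (kermx A) == 0)) => [/eqP //|H]; exfalso; apply: Hn; by exists i.
have w0 : (row i (kermx A))^T != 0.
  apply: contra Hi => /eqP H; apply/eqP; apply: trmx_inj; by rewrite H trmx0.
have := HA _ w0; rewrite trmxK -row_mul mulmx_ker row0 mul0mx mxE ltxx.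
by [].
Qed.

Lemma within_comp n (A : set R) (phi : R -> 'cV[R]_n) (g : 'cV[R]_n -> R) :
  {within A, continuous phi} -> (forall x, differentiable g x) ->
  {within A, continuous (g \o phi)}.
Proof.
move=> Hc Hg x; exact: (@continuous_comp _ _ _ (phi : subspace A -> _) g x (Hc x) (differentiable_continuous (Hg (phi x)))).
Qed.
End Aux.
Unset Implicit Arguments.

Theorem mainTheorem3 (R : realType) (n m NA NB T : nat)
  (* unknown system matrices and known monomial maps *)
  (Astar : 'M[R]_(n, NA)) (Bstar : 'M[R]_(n, NB))
  (Z : 'cV[R]_n -> 'cV[R]_NA) (W : 'cV[R]_n -> 'M[R]_(NB, m))
  (HZ : forall i : 'I_NA, monomial (fun x => Z x i 0))
  (HW : forall (i : 'I_NB) (k : 'I_m), monomial (fun x => W x i k))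
  (* data *)
  (xs : 'I_T -> 'cV[R]_n) (us : 'I_T -> 'cV[R]_m)
  (xdot : 'I_T -> 'cV[R]_n) (z : 'I_T -> 'cV[R]_NA) (v : 'I_T -> 'cV[R]_NB)
  (Hz : forall j, z j = Z (xs j)) (Hv : forall j, v j = W (xs j) *m us j)
  (d : 'I_T -> 'cV[R]_n) (omega : R) (Homega : 0 <= omega)
  (Hdata : forall j, xdot j = Astar *m z j + Bstar *m v j + d j)
  (Hd : forall j, \sum_(i < n) (d j i 0) ^+ 2 <= omega)
  (eps : R) (Heps : 0 < eps)
  (* LMI certificate *)
  (Ai : 'M[R]_(NA + NB)) (Bi : 'M[R]_(NA + NB, n)) (tau : 'I_T -> R)
  (Htau : forall j, 0 <= tau j)
  (HAi : pd Ai)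
  (HLMI :
     let zv := fun j => col_mx (z j) (v j) in
     let c := fun j => - (omega *: (1%:M : 'M[R]_n)) + xdot j *m (xdot j)^T in
     let b := fun j => - (zv j *m (xdot j)^T) in
     let a := fun j => zv j *m (zv j)^T in
     nsd (block_mx
            (- 1%:M - \sum_(j < T) tau j *: c j)
            (row_mx (Bi^T - \sum_(j < T) tau j *: (b j)^T) Bi^T)
            (col_mx (Bi - \sum_(j < T) tau j *: b j) Bi)
            (block_mx (Ai - \sum_(j < T) tau j *: a j) 0 0 (- Ai))))
  (* Pbar = Ai^{-1/2}: the PSD square root of Ai^{-1} *)
  (Pbar : 'M[R]_(NA + NB)) (HPbar_psd : psd Pbar)
  (HPbar_sq : Pbar *m Pbar = invmx Ai)
  (* SOS-type certificate *)
  (l eta h : 'cV[R]_n -> R) (K : 'cV[R]_n -> 'cV[R]_m)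
  (Hl : polyfun l) (Heta_poly : polyfun eta) (Hh : polyfun h)
  (HK : forall k : 'I_m, polyfun (fun x => K x k 0))
  (Heta : forall x, 0 < eta x)
  (HH : forall x : 'cV[R]_n,
     let zetab : 'M[R]_(NA + NB, n) := - (invmx Ai *m Bi) in
     let Qbar_sqrt : 'M[R]_n := 1%:M in (* Qbar = I_n, so Qbar^{1/2} = I_n *)
     let zk := col_mx (Z x) (W x *m K x) in
     let H11 : 'M[R]_1 :=
       (l x * h x + eps)%:M + grad h x *m zetab^T *m zk in
     let H21 : 'M[R]_(NA + NB, 1) := eta x *: (Pbar *m zk) in
     let H31 : 'M[R]_(n, 1) := Qbar_sqrt *m (grad h x)^T in
     nsd (block_mx H11 (row_mx H21^T H31^T) (col_mx H21 H31)
            (block_mx (- (2 * eta x) *: (1%:M : 'M[R]_(NA + NB))) 0 0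
                      (- (2 * eta x) *: (1%:M : 'M[R]_n))))) :
  invariant_set (fun x => Astar *m Z x + Bstar *m (W x *m K x))
            [set x | h x <= 0].
Proof.
set E := row_mx Astar Bstar.
have Hx : forall j, xdot j = E *m col_mx (z j) (v j) + d j.
  by move=> j; rewrite Hdata mul_row_col.
have UA : Ai \in unitmx := pd_unit HAi.
have SA : Ai^T = Ai := HAi.1.
have Hell := ellipsoid Hx Hd Htau UA SA HLMI.
have Hbd : forall x, (grad h x *m (Astar *m Z x + Bstar *m (W x *m K x))) 0 0
                      <= - (l x * h x + eps).
  move=> x.
  have := hbound (Heta x) UA SA HPbar_psd.1 HPbar_sq Hell (HH x).
  cbv zeta; rewrite addrCA addNr addr0 trmxK -mulmxA /E mul_row_col.
  done.
move=> x0 Tt phi Hx0 [[HT0 [Hphi0 [Hc Hder]]] _] t t0 tT /=.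
have [->|tpos] := eqVneq t 0; first by rewrite Hphi0.
have tp : 0 < t by rewrite lt_def tpos t0.
have sub : `[0, t] `<=` [set s : R | 0 <= s /\ (s%:E < Tt)%E].
  move=> s /=; rewrite in_itv /= => /andP[s0 st]; split => //.
  by apply: le_lt_trans tT; rewrite lee_fin.
have Hc' := continuous_subspaceW sub Hc.
have dh := polyfun_diff Hh.
apply: (barrier (f := h \o phi) (p := l \o phi) tp Heps).
- exact: within_comp Hc' dh.
- exact: within_comp Hc' (polyfun_diff (pf_mul Hl Hh)).
- move=> c c0 ct.
  have cT : (c%:E < Tt)%E by apply: lt_trans tT; rewrite lte_fin.
  have [dphi ephi] := Hder c c0 cT.
  have [dc ec] := chain dh dphi.
  split => //; rewrite ec ephi /=.
  have := Hbd (phi c); lra.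
- by rewrite /= Hphi0.
Qed.
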